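(* Let $k$ be a field, $A=kQ_A/I_A$ a monomial algebra with vertices $e_1,\dots,e_n$, and $B$ the algebra obtained by gluing the distinct non-isolated vertices $e_1,e_n$. Assume that for every loop $\alpha$ at $e_1$ or $e_n$ with $\alpha^m\in Z_A$ for some $m\ge2$, $\mathrm{char}(k)\nmid m$. Then $\psi_1$ maps $\mathrm{Ker}(\delta^1_A)$ into $\mathrm{Ker}(\delta^1_B)$, and the induced map $\mathrm{Ker}(\delta^1_A)\hookrightarrow\mathrm{Ker}(\delta^1_B)$ is an injective (restricted) Lie algebra homomorphism.
   Context: Monomial algebra: $A=kQ_A/I_A$, $Q_A$ finite quiver, $I_A$ admissible, generated by a minimal set $Z_A$ of paths of length $\ge2$; $\mathcal B_A$: paths (including trivial ones) avoiding elements of $Z_A$ as subpaths, a basis of $A$. Gluing: $B\subseteq A$ generated by $f_1=e_1+e_n$, $f_i=e_i$ ($2\le i\le n-1$) and all arrows; $B\cong kQ_B/I_B$, $Q_B$ obtained by identifying $e_1,e_n$ to $f_1$ (arrow $\alpha\mapsto\alpha^*$, path $p=a_m\cdots a_1\mapsto p^*=a_m^*\cdots a_1^*$, $e_i^*=f_i$, $e_1^*=e_n^*=f_1$), $I_B$ generated by $Z_B=\{r^*:r\in Z_A\}\cup\{b^*c^*: b,c\text{ arrows},\ t(c),s(b)\in\{e_1,e_n\},\ t(c)\ne s(b)\}$; $\mathcal B_B$ its basis paths. For path sets $X,Y$, $k(X\|Y)$ has basis the pairs $x\|y$ of parallel paths (same source and target). For monomial $\Lambda=kQ/\langle Z\rangle$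 with basis paths $\mathcal B$, $\delta^1:k(Q_1\|\mathcal B)\to k(Z\|\mathcal B)$, $a\|\gamma\mapsto\sum_{r\in Z}r\|r^{a\|\gamma}$, where $u^{a\|\gamma}$ is the sum over occurrences of $a$ in the path $u$ of the path obtained by replacing that occurrence by $\gamma$, keeping only paths in $\mathcal B$. $\mathrm{Ker}\,\delta^1$ is a Lie algebra under $[a\|\gamma,b\|\epsilon]=b\|\epsilon^{a\|\gamma}-a\|\gamma^{b\|\epsilon}$ (it corresponds to the Lie algebra of $E$-bimodule derivations of $kQ_1$ into $\Lambda$; when $\mathrm{char}(k)=p>0$ it is restricted with $p$-power map given by $p$-fold composition of derivations). $\delta^1_A,\delta^1_B$ are these for $A,B$. $\psi_1:k((Q_A)_1\|\mathcal B_A)\to k((Q_B)_1\|\mathcal B_B)$, $a\|p\mapsto a^*\|p^*$. *)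

(* Defs.v *)
From HB Require Import structures.
From mathcomp Require Import all_boot all_order all_algebra.
From mathcomp Require Import freeg.
Set Implicit Arguments. Unset Strict Implicit. Unset Printing Implicit Defensive.
Import GRing.Theory.
Local Open Scope ring_scope.

(* A path in a quiver with vertex type V and arrow type Ar:
   (source, target, [:: a_1; ...; a_m]) represents a_m ... a_1
   (a_1 is applied first); the trivial path e_v is (v, v, [::]). *)
Definition qpath (V Ar : finType) := (V * V * seq Ar)%type.
Definition psrc V Ar (p : qpath V Ar) : V := p.1.1.
Definition ptgt V Ar (p : qpath V Ar) : V := p.1.2.
Definition parrs V Ar (p : qpath V Ar) : seq Ar := p.2.

Section Quiver.
Context (k : fieldType) (V Ar : finType) (s t : Ar -> V).
Local Notation path := (qpath V Ar).

Definition is_path (p : path) : bool :=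
  match parrs p with
  | [::] => psrc p == ptgt p
  | a :: l => [&& s a == psrc p, t (last a l) == ptgt p
                 & path.path (fun x y => t x == s y) a l]
  end.

Definition arrowp (a : Ar) : path := (s a, t a, [:: a]).

Definition parallel (p q : path) : bool :=
  (psrc p == psrc q) && (ptgt p == ptgt q).

Definition subpath (x p : path) : bool := infix (parrs x) (parrs p).

(* Z is a minimal set of paths of length >= 2 generating an admissible ideal *)
Definition monomial_rels (Z : seq path) : Prop :=
  [/\ uniq Z,
      (forall r, r \in Z -> is_path r /\ (2 <= size (parrs r))%N),
      (forall r r', r \in Z -> r' \in Z -> subpath r' r -> r' = r)
    & exists N : nat, forall p, is_path p -> (N <= size (parrs p))%N ->
        has (fun r => subpath r p) Z].

(* the basis paths: paths avoiding elements of Z as subpaths *)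
Definition inB (Z : seq path) (p : path) : bool :=
  is_path p && ~~ has (fun r => subpath r p) Z.

(* u^{a||g}: sum over occurrences of a in u of u with that occurrence
   replaced by g, keeping only basis paths *)
Definition subst (Z : seq path) (u : path) (a : Ar) (g : path)
  : {freeg path / k} :=
  \sum_(0 <= i < size (parrs u) | nth a (parrs u) i == a)
    (let w : path := (psrc u, ptgt u,
                      take i (parrs u) ++ parrs g ++ drop i.+1 (parrs u)) in
     if inB Z w then << w >> else 0).

Definition pairP (x : path) (S : {freeg path / k}) : {freeg (path * path) / k} :=
  fglift (fun y => << (x, y) >>) S.
Definition pairA (a : Ar) (S : {freeg path / k}) : {freeg (Ar * path) / k} :=
  fglift (fun y => << (a, y) >>) S.

(* elements of k(Q_1 || B): keys (a, g) stand for a || g *)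
Definition inQ1B (Z : seq path) (F : {freeg (Ar * path) / k}) : bool :=
  all (fun x => inB Z x.2 && parallel (arrowp x.1) x.2) (dom F).

Definition delta1 (Z : seq path) (F : {freeg (Ar * path) / k})
  : {freeg (path * path) / k} :=
  fglift (fun ag : Ar * path => \sum_(r <- Z) pairP r (subst Z r ag.1 ag.2)) F.

Definition inKer (Z : seq path) (F : {freeg (Ar * path) / k}) : Prop :=
  inQ1B Z F /\ delta1 Z F = 0.

Definition bracket (Z : seq path) (F G : {freeg (Ar * path) / k})
  : {freeg (Ar * path) / k} :=
  fglift (fun ag : Ar * path =>
    fglift (fun be : Ar * path =>
      pairA be.1 (subst Z be.2 ag.1 ag.2) - pairA ag.1 (subst Z ag.2 be.1 be.2))
    G) F.

(* the derivation associated with F acting on linear combinations of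
   paths: u |-> sum F(a,g) u^{a||g} *)
Definition act (Z : seq path) (F : {freeg (Ar * path) / k})
  (S : {freeg path / k}) : {freeg path / k} :=
  fglift (fun u => fglift (fun ag : Ar * path => subst Z u ag.1 ag.2) F) S.

(* p-power map: the element corresponding to the p-fold composite D_F^p,
   i.e. sum over arrows a of a || D_F^p(a) *)
Definition ppow (Z : seq path) (p : nat) (F : {freeg (Ar * path) / k})
  : {freeg (Ar * path) / k} :=
  \sum_(a : Ar) pairA a (iter p (act Z F) << arrowp a >>).

End Quiver.

(* A has vertices 'I_n.+2 : e_1 = ord0, e_n = ord_max.
   B has vertices 'I_n.+1 : f_1 = ord0 (= e_1 + e_n), f_i = e_i otherwise. *)
Section Gluing.
Context (k : fieldType) (n : nat) (Ar : finType) (s t : Ar -> 'I_n.+2).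

Definition glue (i : 'I_n.+2) : 'I_n.+1 :=
  if i == ord_max then ord0 else inord i.

Definition sB (a : Ar) : 'I_n.+1 := glue (s a).
Definition tB (a : Ar) : 'I_n.+1 := glue (t a).

Definition star (p : qpath 'I_n.+2 Ar) : qpath 'I_n.+1 Ar :=
  (glue (psrc p), glue (ptgt p), parrs p).

Definition glued_vertex (i : 'I_n.+2) : bool := (i == ord0) || (i == ord_max).

Definition ZB (Z : seq (qpath 'I_n.+2 Ar)) : seq (qpath 'I_n.+1 Ar) :=
  map star Z ++
  [seq (sB cb.1, tB cb.2, [:: cb.1; cb.2])
  | cb <- [seq (c, b) | c <- enum Ar, b <- enum Ar]
  & [&& glued_vertex (t cb.1), glued_vertex (s cb.2) & t cb.1 != s cb.2]].

Definition psi1 (F : {freeg (Ar * qpath 'I_n.+2 Ar) / k})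
  : {freeg (Ar * qpath 'I_n.+1 Ar) / k} :=
  fglift (fun ap : Ar * qpath 'I_n.+2 Ar => << (ap.1, star ap.2) >>) F.

Definition non_isolated (v : 'I_n.+2) : Prop := exists a : Ar, s a = v \/ t a = v.

End Gluing.

(* Main.v *)
Require Import Defs.
From HB Require Import structures.
From mathcomp Require Import all_boot all_order all_algebra.
From mathcomp Require Import freeg.
From mathcomp Require Import zify.
Import GRing.Theory.
Local Open Scope ring_scope.

Module Helpers.
Set Implicit Arguments. Unset Strict Implicit. Unset Printing Implicit Defensive.

Section Gen.
Context (R : ringType) (K : choiceType) (M : lmodType R).

Lemma fglift0 (f : K -> M) : fglift f (0 : {freeg K / R}) = 0.
Proof. have := lift_is_additive f 0 0. by rewrite subrr => ->; rewrite subrr. Qed.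

Lemma fgliftD (f : K -> M) (D1 D2 : {freeg K / R}) : fglift f (D1 + D2) = fglift f D1 + fglift f D2.
Proof.
have hB := lift_is_additive f.
have hN : forall D, fglift f (- D) = - fglift f D.
  by move=> D; rewrite -sub0r hB fglift0 sub0r.
have := hB D1 (- D2); rewrite opprK => ->; by rewrite hN opprK.
Qed.

Lemma fgliftB (f : K -> M) (D1 D2 : {freeg K / R}) : fglift f (D1 - D2) = fglift f D1 - fglift f D2.
Proof. exact: lift_is_additive. Qed.

Lemma fglift_sum (f : K -> M) I (r : seq I) (P : pred I) (F : I -> {freeg K / R}) :
  fglift f (\sum_(i <- r | P i) F i) = \sum_(i <- r | P i) fglift f (F i).
Proof. by apply: (big_morph (fglift f)); [exact: fgliftD| exact: fglift0]. Qed.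

Lemma fglift_dom (f : K -> M) (D : {freeg K / R}) :
  fglift f D = \sum_(z <- dom D) coeff z D *: f z.
Proof.
rewrite -{1}(freeg_sumE D) fglift_sum; apply: eq_bigr => z _; exact: liftU.
Qed.

Lemma fgliftZ (f : K -> M) c (D : {freeg K / R}) : fglift f (c *: D) = c *: fglift f D.
Proof.
rewrite [c *: D]/(GRing.scale _ _) /= /fgscale fglift_sum fglift_dom scaler_sumr.
by apply: eq_bigr => z _; rewrite liftU scalerA.
Qed.

Lemma fglift_lin (f : K -> M) c (D1 D2 : {freeg K / R}) :
  fglift f (c *: D1 + D2) = c *: fglift f D1 + fglift f D2.
Proof. by rewrite fgliftD fgliftZ. Qed.

Lemma fgliftU1 (f : K -> M) x : fglift f << x >> = f x.
Proof. by rewrite liftU scale1r. Qed.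

Lemma fglift_ext (f g : K -> M) (D : {freeg K / R}) :
  (forall z, z \in dom D -> f z = g z) -> fglift f D = fglift g D.
Proof.
by move=> h; rewrite !fglift_dom; apply: eq_big_seq => z /h ->.
Qed.

End Gen.

Section GenC.
Context (R : ringType) (K : choiceType) (M : lmodType R).
Lemma fglift_comp (N : lmodType R) (L : M -> N) (f : K -> M) (D : {freeg K / R}) :
  (forall c x y, L (c *: x + y) = c *: L x + L y) ->
  L (fglift f D) = fglift (fun z => L (f z)) D.
Proof.
move=> hL.
have L0 : L 0 = 0.
  have h := hL 1 0 0; rewrite !scale1r addr0 in h.
  by apply: (addrI (L 0)); rewrite addr0 -h.
rewrite fglift_dom [RHS]fglift_dom.
elim: (dom D) => [|z r IH]; first by rewrite !big_nil; exact: L0.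
by rewrite !big_cons hL IH.
Qed.

End GenC.

Section Gen2.
Context (R : ringType) (K K' : choiceType).

Lemma coeff_fglift (f : K -> {freeg K' / R}) (D : {freeg K / R}) x :
  coeff x (fglift f D) = \sum_(z <- dom D) coeff z D * coeff x (f z).
Proof.
rewrite fglift_dom raddf_sum; apply: eq_bigr => z _; exact: coeffZ.
Qed.

Lemma dom_fglift (f : K -> {freeg K' / R}) (D : {freeg K / R}) x :
  x \in dom (fglift f D) -> exists2 z, z \in dom D & x \in dom (f z).
Proof.
rewrite mem_dom coeff_fglift => h.
have [z zD hz] : exists2 z, z \in dom D & coeff z D * coeff x (f z) != 0.
  apply/hasP; apply: contraR h => /hasPn hn.
  by rewrite big_seq big1 // => z /hn /negPn /eqP.
exists z => //; rewrite mem_dom; apply: contra hz => /eqP ->; by rewrite mulr0.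
Qed.

End Gen2.

Section Paths.
Context (V Ar : finType) (s t : Ar -> V).

Fixpoint okp (x : V) (l : seq Ar) (y : V) : bool :=
  match l with [::] => x == y | a :: l' => (s a == x) && okp (t a) l' y end.

Definition endp x (l : seq Ar) := last x (map t l).

Lemma okp_last a l y : okp (t a) l y = (t (last a l) == y) && path.path (fun x y => t x == s y) a l.
Proof.
elim: l a => [|b l IH] a /=; first by rewrite andbT.
by rewrite IH eq_sym; case: (t a == s b); rewrite ?andbF.
Qed.

Lemma is_pathE (p : qpath V Ar) : is_path s t p = okp (psrc p) (parrs p) (ptgt p).
Proof.
case: p => [[x y] [|a l]] //=. rewrite /is_path /= okp_last.
by [].
Qed.

Lemma okp_cat x l1 l2 y : okp x (l1 ++ l2) y = okp x l1 (endp x l1) && okp (endp x l1) l2 y.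
Proof.
elim: l1 x => [|a l1 IH] x /=; first by rewrite eqxx.
by rewrite IH /endp /= andbA.
Qed.

Lemma okp_endp x l y : okp x l y -> y = endp x l.
Proof.
elim: l x => [|a l IH] x /=; first by move/eqP.
by case/andP=> _ /IH.
Qed.

Lemma okp_infix2 x l y c b : okp x l y -> infix [:: c; b] l -> t c = s b.
Proof.
move=> h /infixP [p [q E]]; subst l.
move: h; rewrite okp_cat => /andP[_] /=. by case/and3P=> _ /eqP.
Qed.

Lemma is_path_subst (u g : qpath V Ar) a i :
  is_path s t u -> (i < size (parrs u))%N -> nth a (parrs u) i = a ->
  is_path s t g -> psrc g = s a -> ptgt g = t a ->
  is_path s t (psrc u, ptgt u, take i (parrs u) ++ parrs g ++ drop i.+1 (parrs u)).
Proof.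
rewrite !is_pathE => hu hi hn hg gs gt /=.
move: hu; rewrite -{1}(cat_take_drop i (parrs u)) (drop_nth a hi) hn okp_cat.
case/andP=> h1 /= /andP[/eqP ea h2].
rewrite okp_cat h1 /= okp_cat -ea -gs.
have e2 := okp_endp hg. rewrite gt in hg e2. rewrite -e2 hg /=.
exact: h2.
Qed.

End Paths.

Section Glue.
Context (k : fieldType) (n : nat) (Ar : finType) (s t : Ar -> 'I_n.+2).
Context (Z : seq (qpath 'I_n.+2 Ar)).
Local Notation PA := (qpath 'I_n.+2 Ar).
Local Notation PB := (qpath 'I_n.+1 Ar).
Local Notation sb := (sB s).
Local Notation tb := (tB t).
Local Notation ZB := (ZB s t Z).

Definition starP (X : {freeg PA / k}) : {freeg PB / k} := fglift (fun p => << star p >>) X.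
Definition starPP (X : {freeg (PA * PA) / k}) : {freeg (PB * PB) / k} :=
  fglift (fun xy => << (star xy.1, star xy.2) >>) X.

Lemma okp_star x l y : okp s t x l y -> okp sb tb (glue x) l (glue y).
Proof.
elim: l x => [|a l IH] x /=; first by move/eqP->.
by case/andP=> /eqP <- /IH ->; rewrite /sB eqxx.
Qed.

Lemma is_path_star p : is_path s t p -> is_path sb tb (star p).
Proof. by rewrite !is_pathE; apply: okp_star. Qed.

Lemma inB_star w : is_path s t w -> inB sb tb ZB (star w) = inB s t Z w.
Proof.
move=> hw; rewrite /inB hw is_path_star //=; congr negb.
rewrite /ZB has_cat has_map.
have -> : has (fun r => subpath r (star w)) [seq (sB s cb.1, tB t cb.2, [:: cb.1; cb.2])
  | cb <- [seq (c, b) | c <- enum Ar, b <- enum Ar]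
  & [&& glued_vertex (t cb.1), glued_vertex (s cb.2) & t cb.1 != s cb.2]] = false.
  apply/hasPn => r /mapP [[c b]]; rewrite mem_filter /= => /andP[/and3P[_ _ ne] _] ->.
  apply/negP; rewrite /subpath /= => hi.
  move: hw; rewrite is_pathE => /okp_infix2 /(_ hi) e.
  by rewrite e eqxx in ne.
by rewrite orbF.
Qed.

Lemma starP_lin c X Y : starP (c *: X + Y) = c *: starP X + starP Y.
Proof. exact: fglift_lin. Qed.

Lemma subst_star u a g :
  is_path s t u -> is_path s t g -> psrc g = s a -> ptgt g = t a ->
  subst k sb tb ZB (star u) a (star g) = starP (subst k s t Z u a g).
Proof.
move=> hu hg gs gt; rewrite /subst /starP fglift_sum /=.
rewrite [LHS]big_nat_cond [RHS]big_nat_cond; apply: eq_bigr => i /andP[/andP[_ hi] /eqP hn].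
have hw := is_path_subst hu hi hn hg gs gt.
rewrite -[(glue _, glue _, _)]/(star (psrc u, ptgt u, take i (parrs u) ++ parrs g ++ drop i.+1 (parrs u))).
rewrite inB_star //; case: ifP => _; last by rewrite fglift0.
by rewrite fgliftU1.
Qed.

End Glue.

Section Main.
Context (k : fieldType) (n : nat) (Ar : finType) (s t : Ar -> 'I_n.+2).
Context (Z : seq (qpath 'I_n.+2 Ar)).
Local Notation PA := (qpath 'I_n.+2 Ar).
Local Notation PB := (qpath 'I_n.+1 Ar).
Local Notation sb := (sB s).
Local Notation tb := (tB t).
Local Notation ZB := (ZB s t Z).

Lemma star_inj a (p q : PA) : parallel (arrowp s t a) p -> parallel (arrowp s t a) q ->
  star p = star q -> p = q.
Proof.
case: p => [[x1 y1] l1]; case: q => [[x2 y2] l2].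
rewrite /parallel /arrowp /star /psrc /ptgt /parrs /= => /andP[/eqP<- /eqP<-] /andP[/eqP<- /eqP<-].
by case=> ->.
Qed.

Lemma inQ1BP (F : {freeg (Ar * PA) / k}) : inQ1B s t Z F ->
  forall z, z \in dom F -> inB s t Z z.2 /\ parallel (arrowp s t z.1) z.2.
Proof. by move/allP=> h z /h /andP. Qed.

Lemma psi1_inj (F G : {freeg (Ar * PA) / k}) : inQ1B s t Z F -> inQ1B s t Z G ->
  psi1 F = psi1 G -> F = G.
Proof.
move=> /inQ1BP hF /inQ1BP hG e.
have h0 : psi1 (F - G) = 0 by rewrite /psi1 fgliftB; apply/eqP; rewrite subr_eq0 -/(psi1 F) -/(psi1 G) e.
have hH : forall z, z \in dom (F - G) -> parallel (arrowp s t z.1) z.2.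
  by move=> z /domB; rewrite mem_cat => /orP[/hF|/hG] [].
apply/eqP; rewrite -subr_eq0; apply/eqP/eqP/freeg_eqP => x; rewrite coeff0.
case: (boolP (x \in dom (F - G))) => hx; last by rewrite coeff_outdom.
have := congr1 (coeff (x.1, star x.2)) h0; rewrite coeff0 /psi1 coeff_fglift.
rewrite (bigD1_seq x) ?uniq_dom //= coeffU eqxx mulr1 big1_seq ?addr0 //; first by rewrite mulr1.
move=> z /andP[zx zd]; rewrite coeffU.
case: eqP => [e12|]; last by rewrite !mulr0.
have e1 : z.1 = x.1 := congr1 fst e12.
have e2 : star z.2 = star x.2 := congr1 snd e12.
case/eqP: zx; have hz := hH _ zd; rewrite e1 in hz.
have := star_inj hz (hH _ hx) e2; move: e1.
by case: z {e12 e2 hz zd} => ? ? /= -> ->; case: x {hx}.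
Qed.

Lemma fglift_fglift (K1 K2 : choiceType) (M : lmodType k) (g : K2 -> M) (f : K1 -> {freeg K2 / k}) D :
  fglift g (fglift f D) = fglift (fun z => fglift g (f z)) D.
Proof. by apply: fglift_comp => c x y; apply: fglift_lin. Qed.

Lemma psi1_pairA a (Y : {freeg PA / k}) : psi1 (pairA a Y) = pairA a (starP Y).
Proof.
rewrite /psi1 /pairA /starP !fglift_fglift; apply: fglift_ext => z _.
by rewrite !fgliftU1.
Qed.

Lemma psi1B (X Y : {freeg (Ar * PA) / k}) : psi1 (X - Y) = psi1 X - psi1 Y.
Proof. exact: fgliftB. Qed.

Lemma inB_path (Z' : seq PA) p : inB s t Z' p -> is_path s t p.
Proof. by case/andP. Qed.

Lemma par_eq a (g : PA) : parallel (arrowp s t a) g -> psrc g = s a /\ ptgt g = t a.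
Proof. by case/andP => /eqP <- /eqP <-. Qed.

Lemma bracket_psi1 (F G : {freeg (Ar * PA) / k}) : inQ1B s t Z F -> inQ1B s t Z G ->
  psi1 (bracket s t Z F G) = bracket sb tb ZB (psi1 F) (psi1 G).
Proof.
move=> /inQ1BP hF /inQ1BP hG.
rewrite /bracket [psi1 _]fglift_fglift [RHS]fglift_fglift.
apply: fglift_ext => ag /hF [/inB_path pg /par_eq [gs gt]].
rewrite fgliftU1 fglift_fglift [RHS]fglift_fglift /=.
apply: fglift_ext => be /hG [/inB_path pe /par_eq [es et]].
rewrite fgliftU1 /= -/(psi1 _) psi1B !psi1_pairA.
by rewrite -!subst_star.
Qed.

Definition GP (X : {freeg PA / k}) := forall x, x \in dom X -> is_path s t x.

Lemma subst_GP u a g x : x \in dom (subst k s t Z u a g) -> is_path s t x.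
Proof.
rewrite /subst => /dom_sum_subset /flattenP [l /mapP [i _ ->]].
case: ifP => hw; last by rewrite dom0.
by rewrite domU1 inE => /eqP -> ; move: hw; case/andP.
Qed.

Lemma act_GP (F : {freeg (Ar * PA) / k}) X : GP (act s t Z F X).
Proof.
move=> x /dom_fglift [u _] /dom_fglift [ag _]; exact: subst_GP.
Qed.

Lemma act_psi1 (F : {freeg (Ar * PA) / k}) X : inQ1B s t Z F -> GP X ->
  act sb tb ZB (psi1 F) (starP X) = starP (act s t Z F X).
Proof.
move=> /inQ1BP hF hX.
rewrite /act /starP !fglift_fglift; apply: fglift_ext => u /hX pu.
rewrite fgliftU1 /psi1 !fglift_fglift; apply: fglift_ext => ag /hF [/inB_path pg /par_eq [gs gt]].
by rewrite fgliftU1 /= subst_star.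
Qed.

Lemma iter_act_psi1 (F : {freeg (Ar * PA) / k}) p X : inQ1B s t Z F -> GP X ->
  iter p (act sb tb ZB (psi1 F)) (starP X) = starP (iter p (act s t Z F) X).
Proof.
move=> hF hX; elim: p => [|p IH] //=.
rewrite IH act_psi1 //; case: p {IH} => [|p] //=; exact: act_GP.
Qed.

Lemma ppow_psi1 p (F : {freeg (Ar * PA) / k}) : inQ1B s t Z F ->
  psi1 (ppow s t Z p F) = ppow sb tb ZB p (psi1 F).
Proof.
move=> hF; rewrite /ppow /psi1 fglift_sum; apply: eq_bigr => a _.
rewrite -/(psi1 _) psi1_pairA -iter_act_psi1 //.
  by rewrite /starP fgliftU1.
by move=> x; rewrite domU1 inE => /eqP ->; rewrite /is_path /= !eqxx.
Qed.

Lemma psi1_Q1B (F : {freeg (Ar * PA) / k}) : inQ1B s t Z F -> inQ1B sb tb ZB (psi1 F).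
Proof.
move=> /inQ1BP hF; apply/allP => x /dom_fglift [z /hF [hb /par_eq [gs gt]]].
rewrite domU1 inE => /eqP -> /=; rewrite inB_star ?hb ?(inB_path hb) //=.
by rewrite /parallel /= /sB /tB /psrc /ptgt /= -/(psrc _) -/(ptgt _) gs gt !eqxx.
Qed.

Lemma newrel_in c b : glued_vertex (t c) -> glued_vertex (s b) -> t c != s b ->
  (sb c, tb b, [:: c; b]) \in ZB.
Proof.
move=> gc gb ne; rewrite mem_cat; apply/orP; right.
apply/mapP; exists (c, b) => //; rewrite mem_filter /= gc gb ne /=.
by apply: allpairs_f; rewrite mem_enum.
Qed.

Lemma not_inB_new (w : PB) c b : glued_vertex (t c) -> glued_vertex (s b) -> t c != s b ->
  infix [:: c; b] (parrs w) -> inB sb tb ZB w = false.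
Proof.
move=> gc gb ne hi; rewrite /inB; apply/negbTE/nandP; right; apply/negPn/hasP.
by exists (sb c, tb b, [:: c; b]); [apply: newrel_in|].
Qed.

Lemma pairP_star (r : PA) (X : {freeg PA / k}) : pairP (star r) (starP X) = starPP (pairP r X).
Proof.
rewrite /pairP /starP /starPP !fglift_fglift; apply: fglift_ext => z _; by rewrite !fgliftU1.
Qed.

Lemma delta1_psi1 (F : {freeg (Ar * PA) / k}) :
  (forall r, r \in Z -> is_path s t r) -> inQ1B s t Z F ->
  (forall c, s c = t c -> glued_vertex (s c) -> (c, (s c, s c, [::])) \notin dom F) ->
  delta1 sb tb ZB (psi1 F) = starPP (delta1 s t Z F).
Proof.
move=> hZ hQ h0; have hF := inQ1BP hQ.
rewrite /delta1 /psi1 /starPP !fglift_fglift; apply: fglift_ext => ag agd.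
have [hb /par_eq [gs gt]] := hF _ agd; have pg := inB_path hb.
rewrite fgliftU1 /= big_cat /= big_map fglift_sum.
rewrite [X in _ + X = _]big1_seq ?addr0.
  rewrite big_seq [RHS]big_seq; apply: eq_bigr => r /hZ pr.
  by rewrite subst_star // pairP_star.
move=> r /andP[_ /mapP [[c b]]]; rewrite mem_filter /= => /andP[/and3P[gc gb ne] _] -> /=.
rewrite /subst /= big_nat_cond big1 ?/pairP ?fglift0 //.
move=> i /andP[/andP[_ hi] /eqP hn].
case: ifP => // hw; exfalso; move: hw.
case: ag agd gs gt hn hb pg => a g /= agd gs gt hn hb pg.
case E: (parrs g) => [|x l].
  move: pg; rewrite /is_path E => /eqP e.
  have eg : g = (s a, s a, [::]).
    by move: E e gs gt; case: g {agd hb} => [[gx gy] l0]; rewrite /psrc /ptgt /parrs /= => -> -> -> _.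
  have sa : s a = t a by rewrite -gs -gt e.
  case: i hi hn => [|[|i]] // _ /= ea; subst a; move=> _.
  - apply: (negP (h0 c sa _)); first by rewrite sa.
    by rewrite -eg.
  - apply: (negP (h0 b sa _)); first by [].
    by rewrite -eg.
case: i hi hn => [|[|i]] // _ /= ea; subst a.
- have ht : t (last x l) = t c.
    by move: pg; rewrite /is_path E => /and3P[_ /eqP -> _].
  rewrite (not_inB_new (c := last x l) (b := b)) ?ht //.
  change (infix [:: last x l; b] ((x :: l) ++ [:: b])).
  by rewrite (lastI x l) cat_rcons; apply: suffix_infix.
- have hs : s x = s b.
    by move: pg; rewrite /is_path E => /and3P[/eqP -> _ _].
  rewrite (not_inB_new (c := c) (b := x)) ?hs //.
  change (infix [:: c; x] ([:: c; x] ++ (l ++ [::]))); exact: prefix_infix.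
Qed.

End Main.

Section Loop.
Context (k : fieldType) (n : nat) (Ar : finType) (s t : Ar -> 'I_n.+2).
Context (Z : seq (qpath 'I_n.+2 Ar)).
Local Notation PA := (qpath 'I_n.+2 Ar).

Lemma okp_nseq c m : s c = t c -> okp s t (s c) (nseq m c) (s c).
Proof. by move=> e; elim: m => [|m IH] /=; rewrite ?eqxx // -e IH. Qed.

Lemma coeff_pairP (x r : PA) q (X : {freeg PA / k}) :
  coeff (x, q) (pairP r X) = if r == x then coeff q X else 0.
Proof.
rewrite /pairP coeff_fglift.
case: eqP => [->|ne].
  transitivity (coeff q (\sum_(z <- dom X) << coeff z X *g z >>)); last by rewrite freeg_sumE.
  rewrite (big_morph (coeff q) (@coeffD _ _ q) (@coeff0 _ _ q)); apply: eq_bigr => y _.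
  by rewrite !coeffU mul1r xpair_eqE eqxx.
by rewrite big1 // => y _; rewrite coeffU xpair_eqE; case: eqP => //= _; rewrite mulr0 mulr0.
Qed.

Lemma coeff_U (x : PA) (w : PA) : coeff x << w >> = (w == x)%:R :> k.
Proof. by rewrite coeffU mul1r. Qed.

Lemma last_nseq' (x : 'I_n.+2) m : last x (nseq m x) = x.
Proof. by elim: m. Qed.

Lemma rel_loop c : monomial_rels s t Z -> s c = t c ->
  exists2 m, (2 <= m)%N & (s c, s c, nseq m c) \in Z.
Proof.
case=> uZ hZ hmin [N hN] sc.
have hp : is_path s t (s c, s c, nseq N.+2 c) by rewrite is_pathE okp_nseq.
have hNs : (N <= size (parrs (s c, s c, nseq N.+2 c)))%N.
  by rewrite /= size_nseq; apply: leq_trans (leqnSn _) (leqnSn _).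
have /hasP [r rZ hr] := hN _ hp hNs.
have [pr sr] := hZ r rZ.
have er : parrs r = nseq (size (parrs r)) c.
  apply/all_pred1P/allP => y /(mem_infix hr); rewrite mem_nseq => /andP[_ /eqP ->] /=; exact: eqxx.
exists (size (parrs r)) => //.
move: pr rZ er sr; rewrite is_pathE.
case: r {hr} => [[x y] l]; rewrite /psrc /ptgt /parrs /= => h rZ er sr.
rewrite er in h rZ; move: h rZ sr; case: (size l) => [|m] //= /andP[/eqP <- h] rZ _.
have := okp_endp h; rewrite /endp map_nseq -sc last_nseq' => ey.
by rewrite ey in rZ.
Qed.

Lemma loop_notin (F : {freeg (Ar * PA) / k}) c : monomial_rels s t Z -> inKer s t Z F -> s c = t c ->
  (forall m, (2 <= m)%N -> (s c, s c, nseq m c) \in Z -> (m%:R != 0 :> k)) ->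
  (c, (s c, s c, [::])) \notin dom F.
Proof.
move=> hM [hQ hd] sc hch.
have [m m2 rZ] := rel_loop hM sc; have mnz := hch m m2 rZ.
case: hM => uZ hZ hmin _.
have m0 : (0 < m)%N by apply: leq_trans m2.
set v := s c; set r := (v, v, nseq m c); set q := (v, v, nseq m.-1 c); set e : PA := (v, v, [::]).
have inBq : inB s t Z q.
  rewrite /inB is_pathE /= okp_nseq //=; apply/hasPn => r' r'Z; apply/negP => hi.
  have hi' : subpath r' r.
    rewrite /subpath /=; apply: (infix_trans hi).
    have -> : nseq m c = nseq m.-1 c ++ nseq 1 c by rewrite -nseqD addn1 prednK.
    exact: prefix_infix.
  have er' := hmin _ _ rZ r'Z hi'; rewrite er' in hi.
  move: (size_infix hi); rewrite /= !size_nseq => hle.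
  have hlt : (m.-1 < m)%N by rewrite ltn_predL.
  by move: (leq_ltn_trans hle hlt); rewrite ltnn.
have key : forall z, z \in dom F ->
    coeff (r, q) (\sum_(r' <- Z) pairP r' (subst k s t Z r' z.1 z.2)) = if z == (c, e) then m%:R else 0.
  move=> [a g] /(inQ1BP hQ) [hb /par_eq [gs gt]] /=.
  rewrite (big_morph (coeff (r,q)) (@coeffD _ _ _) (@coeff0 _ _ _)).
  under eq_bigr do rewrite coeff_pairP.
  rewrite (bigD1_seq r) ?uZ //= eqxx big1 ?addr0; last by move=> r' /negbTE ->.
  rewrite /subst (big_morph (coeff q) (@coeffD _ _ _) (@coeff0 _ _ _)) /= size_nseq big_mkcond /=.
  have hw : forall i, (i < m)%N -> nth a (nseq m c) i == a ->
      coeff q (if inB s t Z (v, v, take i (nseq m c) ++ parrs g ++ drop i.+1 (nseq m c))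
               then << (v, v, take i (nseq m c) ++ parrs g ++ drop i.+1 (nseq m c)) >> else 0)
      = ((a, g) == (c, e))%:R :> k.
    move=> j jm; rewrite nth_nseq jm => /eqP ca; subst a.
    rewrite xpair_eqE eqxx /=.
    case: (eqVneq g e) => [ge|ge].
      rewrite ge /= take_nseq ?(ltnW jm) // drop_nseq -nseqD.
      have -> : (j + (m - j.+1) = m.-1)%N by lia.
      by rewrite inBq coeff_U eqxx.
    case: ifP => _; last by rewrite coeff0.
    rewrite coeff_U; case: eqP => // /(congr1 (fun w : PA => size (parrs w))).
    rewrite /= !size_cat size_takel ?size_nseq ?(ltnW jm) // size_drop size_nseq => hs.
    have g0 : size (parrs g) = 0%N by lia.
    case/eqP: ge; move: g0 gs gt; case: g {hb hs} => [[gx gy] l] /=; rewrite /psrc /ptgt /parrs /=.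
    by move/size0nil -> => -> ->; rewrite -sc.
  rewrite (eq_big_nat _ _ (F2 := fun _ => ((a, g) == (c, e))%:R)).
    by rewrite sumr_const_nat subn0; case: eqP => _ //=; rewrite mul0rn.
  move=> i /andP[_ im]; case: ifP => hn; first exact: hw.
  rewrite nth_nseq im in hn; rewrite xpair_eqE.
  by rewrite eq_sym hn.
apply/negP => ced.
have := congr1 (coeff (r, q)) hd; rewrite coeff0 /delta1 coeff_fglift.
have -> : \sum_(z <- dom F) coeff z F * coeff (r, q) (\sum_(r' <- Z) pairP r' (subst k s t Z r' z.1 z.2))
    = \sum_(z <- dom F) coeff z F * (if z == (c, e) then m%:R else 0).
  by apply: eq_big_seq => z zd; rewrite key.
rewrite (bigD1_seq (c, e)) ?uniq_dom //= eqxx big1 ?addr0.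
  move/eqP; rewrite mulf_eq0 (negbTE mnz) orbF => /eqP h.
  by move: ced; rewrite mem_dom h eqxx.
by move=> z zne; rewrite (negbTE zne) mulr0.
Qed.

End Loop.

End Helpers.
Import Helpers.

Theorem proposition3p12 (k : fieldType) (n : nat) (Ar : finType)
    (s t : Ar -> 'I_n.+2) (Z : seq (qpath 'I_n.+2 Ar)) :
  monomial_rels s t Z ->
  non_isolated s t ord0 -> non_isolated s t ord_max ->
  (forall (al : Ar) (m : nat),
      s al = t al -> glued_vertex (s al) -> (2 <= m)%N ->
      (s al, s al, nseq m al) \in Z ->
      forall p : nat, p \in [pchar k] -> ~~ (p %| m)%N) ->
  [/\ (forall F : {freeg (Ar * qpath 'I_n.+2 Ar) / k},
          inKer s t Z F -> inKer (sB s) (tB t) (ZB s t Z) (psi1 F)),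
      (forall (c : k) (F G : {freeg (Ar * qpath 'I_n.+2 Ar) / k}),
          psi1 (c *: F + G) = c *: psi1 F + psi1 G),
      (forall F G : {freeg (Ar * qpath 'I_n.+2 Ar) / k},
          inKer s t Z F -> inKer s t Z G -> psi1 F = psi1 G -> F = G),
      (forall F G : {freeg (Ar * qpath 'I_n.+2 Ar) / k},
          inKer s t Z F -> inKer s t Z G ->
          psi1 (bracket s t Z F G) =
          bracket (sB s) (tB t) (ZB s t Z) (psi1 F) (psi1 G))
    & (forall p : nat, p \in [pchar k] ->
        forall F : {freeg (Ar * qpath 'I_n.+2 Ar) / k},
          inKer s t Z F ->
          psi1 (ppow s t Z p F) = ppow (sB s) (tB t) (ZB s t Z) p (psi1 F))].
Proof.
move=> hM h1 h2 hch.
have hZ : forall r, r \in Z -> is_path s t r by case: hM => _ h _ _ r /h [].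
have h0 : forall F : {freeg (Ar * qpath 'I_n.+2 Ar) / k}, inKer s t Z F -> forall c, s c = t c -> glued_vertex (s c) ->
    (c, (s c, s c, [::])) \notin dom F.
  move=> F hK c sc gc; apply: (loop_notin hM hK sc) => m m2 rZ.
  apply/negP => hm0.
  have m0 : (0 < m)%N by apply: leq_trans m2.
  have [p pp] := natf0_pchar m0 hm0.
  by have := hch c m sc gc m2 rZ p pp; rewrite (dvdn_pcharf pp) hm0.
split.
- move=> F hK; split; first by apply: psi1_Q1B; case: hK.
  rewrite delta1_psi1 //; first by case: hK => _ ->; rewrite /starPP fglift0.
    by case: hK.
  exact: h0.
- move=> c F G; exact: fglift_lin.
- move=> F G hF hG; exact: (psi1_inj (proj1 hF) (proj1 hG)).
- move=> F G hF hG; exact: (bracket_psi1 (proj1 hF) (proj1 hG)).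
- move=> p _ F hF; exact: (ppow_psi1 p (proj1 hF)).
Qed.
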